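(* Let $(n_k)_{k\ge0}$ be a strictly increasing sequence of nonnegative integers. Then $(y_{n_k})_{k\ge0}$ is a Stieltjes moment sequence for every Stieltjes moment sequence $(y_n)_{n\ge0}$ if and only if there exist $d,\ell\in\mathbb{N}$ such that $n_k=dk+\ell$ for all $k\in\mathbb{N}$.
   Context: A Stieltjes moment sequence is a sequence $y$ for which there is a nonnegative Borel measure $\mu$ supported in $[0,\infty)$ with $y_n=\int x^n\,d\mu$ for all $n\ge0$. $\mathbb{N}=\{0,1,2,\dots\}$. *)

(* Defs.v *)
From Stdlib Require Import Reals List.
Open Scope R_scope.

Inductive borel : (R -> Prop) -> Prop :=
| borel_lt (a : R) : borel (fun x => x < a)
| borel_compl (A : R -> Prop) : borel A -> borel (fun x => ~ A x)
| borel_union (A : nat -> R -> Prop) :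
    (forall k, borel (A k)) -> borel (fun x => exists k, A k x).

Definition borel_measure (mu : (R -> Prop) -> R) : Prop :=
  (forall A, borel A -> 0 <= mu A) /\
  mu (fun _ => False) = 0 /\
  (forall A : nat -> R -> Prop,
     (forall k, borel (A k)) ->
     (forall i j x, i <> j -> A i x -> A j x -> False) ->
     infinite_sum (fun k => mu (A k)) (mu (fun x => exists k, A k x))).

Definition supported_nonneg (mu : (R -> Prop) -> R) : Prop :=
  mu (fun x => x < 0) = 0.

(* s is the integral over [0,+oo) of a nonnegative simple function
   sum_{i<N} c_i 1_{A_i} (A_i disjoint Borel subsets of [0,+oo)) lying below f. *)
Definition simple_below (mu : (R -> Prop) -> R) (f : R -> R) (s : R) : Prop :=
  exists (N : nat) (c : nat -> R) (A : nat -> R -> Prop),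
    (forall i, (i < N)%nat ->
       0 <= c i /\ borel (A i) /\ (forall x, A i x -> 0 <= x /\ c i <= f x)) /\
    (forall i j x, (i < N)%nat -> (j < N)%nat -> i <> j -> A i x -> A j x -> False) /\
    s = fold_right Rplus 0 (map (fun i => c i * mu (A i)) (seq 0 N)).

(* Lebesgue integral over [0,+oo) of a nonnegative function f equals I
   (in particular it is finite): I is the supremum of the integrals of
   nonnegative simple functions below f. *)
Definition integral_nonneg_eq (mu : (R -> Prop) -> R) (f : R -> R) (I : R) : Prop :=
  is_lub (simple_below mu f) I.

Definition stieltjes_moment_seq (y : nat -> R) : Prop :=
  exists mu : (R -> Prop) -> R,
    borel_measure mu /\ supported_nonneg mu /\
    forall n : nat, integral_nonneg_eq mu (fun x => x ^ n) (y n).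

(* Main.v *)
Require Import Defs.
From Stdlib Require Import Reals Lra Lia List Classical ClassicalDescription FunctionalExtensionality PropExtensionality.
Open Scope R_scope.

Definition sumN (N : nat) (f : nat -> R) : R := fold_right Rplus 0 (map f (seq 0 N)).

Lemma fold_plus_shift (l : list R) a : fold_right Rplus a l = fold_right Rplus 0 l + a.
Proof. induction l; simpl; [lra| rewrite IHl; lra]. Qed.

Lemma sumN_S N f : sumN (S N) f = sumN N f + f N.
Proof.
  unfold sumN. rewrite seq_S, map_app, fold_right_app. simpl.
  rewrite fold_plus_shift. lra.
Qed.

Lemma sumN_0 f : sumN 0 f = 0.
Proof. reflexivity. Qed.

Lemma sumN_ext N f g : (forall i, (i < N)%nat -> f i = g i) -> sumN N f = sumN N g.
Proof.
  induction N; intros H; [reflexivity|]. rewrite !sumN_S, IHN, H; auto; intros; apply H; lia.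
Qed.

Lemma sumN_le N f g : (forall i, (i < N)%nat -> f i <= g i) -> sumN N f <= sumN N g.
Proof.
  induction N; intros H; [rewrite !sumN_0; lra|]. rewrite !sumN_S.
  assert (sumN N f <= sumN N g) by (apply IHN; intros; apply H; lia).
  assert (f N <= g N) by (apply H; lia). lra.
Qed.

Lemma sumN_nonneg N f : (forall i, (i < N)%nat -> 0 <= f i) -> 0 <= sumN N f.
Proof.
  intros H. replace 0 with (sumN N (fun _ => 0)). apply sumN_le; auto.
  induction N; [reflexivity|]. rewrite sumN_S, IHN; [lra|]. intros; apply H; lia.
Qed.

Lemma sumN_zero N : sumN N (fun _ => 0) = 0.
Proof. induction N; [reflexivity|]. rewrite sumN_S, IHN; lra. Qed.

Lemma sumN_plus N f g : sumN N (fun i => f i + g i) = sumN N f + sumN N g.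
Proof. induction N; [unfold sumN; simpl; lra|]. rewrite !sumN_S, IHN; lra. Qed.

Lemma sumN_scal N a f : sumN N (fun i => a * f i) = a * sumN N f.
Proof. induction N; [unfold sumN; simpl; lra|]. rewrite !sumN_S, IHN; lra. Qed.

Lemma sumN_app N1 N2 f : sumN (N1 + N2) f = sumN N1 f + sumN N2 (fun i => f (N1 + i)%nat).
Proof.
  induction N2.
  - rewrite Nat.add_0_r, sumN_0; lra.
  - rewrite Nat.add_succ_r, !sumN_S, IHN2; lra.
Qed.

Lemma sumN_sum_f n f : sumN (S n) f = sum_f_R0 f n.
Proof. induction n; [unfold sumN; simpl; lra|]. rewrite sumN_S, IHn; simpl; lra. Qed.

Lemma sum_f_swap K N (g : nat -> nat -> R) :
  sum_f_R0 (fun k => sumN N (fun i => g i k)) K = sumN N (fun i => sum_f_R0 (g i) K).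
Proof.
  induction K; simpl; [reflexivity|]. rewrite IHK, <- sumN_plus. reflexivity.
Qed.

Lemma cv_sumN N (c : nat -> R) (g : nat -> nat -> R) (G : nat -> R) :
  (forall i, (i < N)%nat -> Un_cv (fun K => sum_f_R0 (g i) K) (G i)) ->
  Un_cv (fun K => sumN N (fun i => c i * sum_f_R0 (g i) K)) (sumN N (fun i => c i * G i)).
Proof.
  induction N; intros H.
  - intros e He. exists 0%nat. intros. rewrite !sumN_0. unfold Rdist. rewrite Rminus_0_r, Rabs_R0. lra.
  - rewrite sumN_S.
    apply (Un_cv_ext (fun K => sumN N (fun i => c i * sum_f_R0 (g i) K) + c N * sum_f_R0 (g N) K)).
    { intros; rewrite sumN_S; reflexivity. }
    apply CV_plus. apply IHN; intros; apply H; lia.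
    apply (CV_mult (fun _ => c N)). intros e He; exists 0%nat; intros; unfold Rdist; rewrite Rminus_diag, Rabs_R0; lra.
    apply H; lia.
Qed.

Lemma set_ext (A B : R -> Prop) : (forall x, A x <-> B x) -> A = B.
Proof. intros H; apply functional_extensionality; intros x; apply propositional_extensionality; auto. Qed.

Lemma borel_ext A B : borel A -> (forall x, A x <-> B x) -> borel B.
Proof. intros HA H; rewrite <- (set_ext A B H); auto. Qed.

Lemma borel_union2 A B : borel A -> borel B -> borel (fun x => A x \/ B x).
Proof.
  intros HA HB.
  apply borel_ext with (fun x => exists k, (match k with O => A | S _ => B end) x).
  - apply borel_union. intros [|k]; auto.
  - intros x; split. intros [[|k] Hk]; auto. intros [H|H]; [exists O|exists 1%nat]; auto.
Qed.

Lemma borel_inter A B : borel A -> borel B -> borel (fun x => A x /\ B x).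
Proof.
  intros HA HB. apply borel_ext with (fun x => ~ ((fun x => ~ A x) x \/ (fun x => ~ B x) x)).
  - apply borel_compl, borel_union2; apply borel_compl; auto.
  - intros x; simpl; split.
    + intros H. split; apply NNPP; tauto.
    + tauto.
Qed.

Lemma borel_ge a : borel (fun x => a <= x).
Proof. apply borel_ext with (fun x => ~ x < a). apply borel_compl, borel_lt. intros; lra. Qed.

Lemma borel_le a : borel (fun x => x <= a).
Proof.
  apply borel_ext with (fun x => ~ (exists k, (fun k x => ~ x < a + / INR (S k)) k x)).
  - apply borel_compl, borel_union. intros k; apply borel_compl, borel_lt.
  - intros x; split.
    + intros H. apply Rnot_lt_le. intros Hlt.
      destruct (archimed_cor1 (x - a)) as [N [HN1 HN2]]; [lra|].
      apply H. exists (pred N). replace (S (pred N)) with N by lia. lra.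
    + intros H [k Hk]. apply Hk.
      assert (0 < / INR (S k)) by (apply Rinv_0_lt_compat, lt_0_INR; lia). lra.
Qed.

Lemma borel_single a : borel (fun x => x = a).
Proof.
  apply borel_ext with (fun x => a <= x /\ x <= a).
  apply borel_inter; [apply borel_ge|apply borel_le]. intros; lra.
Qed.

Lemma borel_True : borel (fun _ => True).
Proof.
  apply borel_ext with (fun x => x < 0 \/ 0 <= x). apply borel_union2; [apply borel_lt|apply borel_ge].
  intros; split; auto; intros; lra.
Qed.

Lemma borel_False : borel (fun _ => False).
Proof.
  apply borel_ext with (fun x => ~ True). apply borel_compl, borel_True. tauto.
Qed.

Lemma borel_preimage (phi : R -> R) :
  (forall a, borel (fun x => 0 <= x /\ phi x < a)) ->
  forall A, borel A -> borel (fun x => 0 <= x /\ A (phi x)).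
Proof.
  intros Hphi A HA. induction HA.
  - apply Hphi.
  - apply borel_ext with (fun x => 0 <= x /\ ~ (0 <= x /\ A (phi x))).
    + apply borel_inter; [apply borel_ge| apply borel_compl; auto].
    + intros x; tauto.
  - apply borel_ext with (fun x => exists k, (fun k x => 0 <= x /\ A k (phi x)) k x).
    + apply borel_union; auto.
    + intros x; split. intros [k [H1 H2]]; split; eauto. intros [H1 [k H2]]; eauto.
Qed.

Definition rt (m : nat) (t : R) : R := if Rlt_dec 0 t then Rpower t (/ INR m) else 0.

Lemma rt_nonneg m t : 0 <= rt m t.
Proof. unfold rt. destruct Rlt_dec. unfold Rpower. left; apply exp_pos. lra. Qed.

Lemma rt_pow m t : (1 <= m)%nat -> 0 <= t -> (rt m t) ^ m = t.
Proof.
  intros Hm Ht. unfold rt. destruct Rlt_dec.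
  - rewrite <- Rpower_pow by (unfold Rpower; apply exp_pos).
    rewrite Rpower_mult, Rinv_l, Rpower_1; auto. apply not_0_INR; lia.
  - destruct m; [lia|]. simpl. lra.
Qed.

Lemma pow_lt_mono m x y : (1 <= m)%nat -> 0 <= x -> x < y -> x ^ m < y ^ m.
Proof.
  intros Hm Hx Hxy. induction m; [lia|]. destruct m.
  - simpl; lra.
  - assert (x ^ S m < y ^ S m) by (apply IHm; lia).
    simpl in *. assert (0 <= x * x ^ m) by (apply Rmult_le_pos; auto; apply pow_le; auto).
    nra.
Qed.

Lemma pow_le_inv m x y : (1 <= m)%nat -> 0 <= x -> 0 <= y -> x ^ m <= y ^ m -> x <= y.
Proof.
  intros Hm Hx Hy H. apply Rnot_lt_le. intros Hl. pose proof (pow_lt_mono m y x Hm Hy Hl). lra.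
Qed.

Lemma rt_of_pow m x : (1 <= m)%nat -> 0 <= x -> rt m (x ^ m) = x.
Proof.
  intros Hm Hx. assert (Hp : 0 <= x ^ m) by (apply pow_le; auto).
  pose proof (rt_pow m _ Hm Hp). pose proof (rt_nonneg m (x ^ m)).
  apply Rle_antisym; apply (pow_le_inv m); auto; lra.
Qed.

Definition lubR (E : R -> Prop) : R :=
  match excluded_middle_informative (bound E /\ exists x, E x) with
  | left H => proj1_sig (completeness E (proj1 H) (proj2 H))
  | right _ => 0 end.

Lemma lubR_spec E : bound E -> (exists x, E x) -> is_lub E (lubR E).
Proof.
  intros Hb He. unfold lubR. destruct excluded_middle_informative as [H|H].
  - destruct completeness; auto.
  - exfalso; auto.
Qed.

Lemma lub_approx E l eps : is_lub E l -> eps > 0 -> exists x, E x /\ l - eps < x.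
Proof.
  intros [Hub Hl] He. apply NNPP; intros Hn.
  assert (l <= l - eps). { apply Hl. intros x Hx. apply Rnot_lt_le. intros Hlt. apply Hn. eauto. }
  lra.
Qed.

Lemma sup_sum M (T : nat -> R -> Prop) (L a : nat -> R) (B : R) :
  (forall j, (j < M)%nat -> is_lub (T j) (L j) /\ exists x, T j x) ->
  (forall j, (j < M)%nat -> 0 <= a j) ->
  (forall s : nat -> R, (forall j, (j < M)%nat -> T j (s j)) -> sumN M (fun j => a j * s j) <= B) ->
  sumN M (fun j => a j * L j) <= B.
Proof.
  revert B. induction M; intros B HT Ha H.
  - rewrite sumN_0. specialize (H (fun _ => 0)). rewrite sumN_0 in H. apply H. intros; lia.
  - rewrite sumN_S.
    assert (Key : forall t, T M t -> sumN M (fun j => a j * L j) <= B - a M * t).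
    { intros t Ht. apply IHM.
      - intros; apply HT; lia.
      - intros; apply Ha; lia.
      - intros s Hs. specialize (H (fun j => if Nat.eqb j M then t else s j)).
        rewrite sumN_S, Nat.eqb_refl in H.
        rewrite (sumN_ext M _ (fun j => a j * s j)) in H.
        + enough (sumN M (fun j => a j * s j) + a M * t <= B) by lra. apply H.
          intros j Hj. destruct (Nat.eqb_spec j M); subst; auto. apply Hs; lia.
        + intros i Hi. destruct (Nat.eqb_spec i M); [lia|reflexivity]. }
    destruct (HT M ltac:(lia)) as [[Hub Hl] [t0 Ht0]].
    assert (HaM : 0 <= a M) by (apply Ha; lia).
    destruct (Req_dec (a M) 0) as [Hz|Hz].
    + rewrite Hz in *. specialize (Key t0 Ht0). lra.
    + assert (L M <= (B - sumN M (fun j => a j * L j)) / a M).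
      { apply Hl. intros t Ht. specialize (Key t Ht).
        apply Rmult_le_reg_l with (a M); [lra|]. field_simplify; lra. }
      apply Rmult_le_compat_l with (r := a M) in H0; [|lra].
      replace (a M * ((B - sumN M (fun j => a j * L j)) / a M)) with (B - sumN M (fun j => a j * L j)) in H0 by (field; lra).
      lra.
Qed.

Definition simple_on (mu : (R -> Prop) -> R) (E : R -> Prop) (f : R -> R) (s : R) : Prop :=
  exists (N : nat) (c : nat -> R) (A : nat -> R -> Prop),
    (forall i, (i < N)%nat ->
       0 <= c i /\ borel (A i) /\ (forall x, A i x -> E x /\ 0 <= x /\ c i <= f x)) /\
    (forall i j x, (i < N)%nat -> (j < N)%nat -> i <> j -> A i x -> A j x -> False) /\
    s = sumN N (fun i => c i * mu (A i)).

Lemma simple_on_below mu E f s : simple_on mu E f s -> simple_below mu f s.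
Proof.
  intros (N & c & A & H1 & H2 & H3). exists N, c, A. split; [|split; auto].
  intros i Hi. destruct (H1 i Hi) as (? & ? & H). repeat split; auto; intros; apply H; auto.
Qed.

Lemma simple_below_on mu f s : simple_below mu f s -> simple_on mu (fun _ => True) f s.
Proof.
  intros (N & c & A & H1 & H2 & H3). exists N, c, A. split; [|split; auto].
  intros i Hi. destruct (H1 i Hi) as (? & ? & H). repeat split; auto; intros; apply H; auto.
Qed.

Lemma simple_on_mono mu E F f g s :
  (forall x, E x -> 0 <= x -> F x) -> (forall x, E x -> 0 <= x -> f x <= g x) ->
  simple_on mu E f s -> simple_on mu F g s.
Proof.
  intros HEF Hfg (N & c & A & H1 & H2 & H3). exists N, c, A. split; [|split; auto].
  intros i Hi. destruct (H1 i Hi) as (? & ? & H). split; [auto|split; [auto|]].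
  intros y Hy. destruct (H y Hy) as (HE & Hy0 & Hc).
  split; [apply HEF; auto|split; auto]. specialize (Hfg y HE Hy0); lra.
Qed.

Lemma simple_on_scal mu E f s a : 0 <= a ->
  simple_on mu E f s -> simple_on mu E (fun x => a * f x) (a * s).
Proof.
  intros Ha (N & c & A & H1 & H2 & H3). exists N, (fun i => a * c i), A. split; [|split; auto].
  - intros i Hi. destruct (H1 i Hi) as (Hc & Hb & H). split; [apply Rmult_le_pos; auto|split; auto].
    intros y Hy. destruct (H y Hy) as (? & ? & ?). split; auto. split; auto.
    apply Rmult_le_compat_l; auto.
  - rewrite H3, <- sumN_scal. apply sumN_ext; intros; lra.
Qed.

Lemma simple_on_zero mu E f : simple_on mu E f 0.
Proof. exists O, (fun _ => 0), (fun _ _ => False). repeat split; intros; try lia; auto. Qed.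

Lemma simple_on_concat mu E F f s t :
  (forall x, E x -> F x -> False) ->
  simple_on mu E f s -> simple_on mu F f t -> simple_on mu (fun x => E x \/ F x) f (s + t).
Proof.
  intros Hd (N & c & A & H1 & H2 & H3) (N' & c' & A' & H1' & H2' & H3').
  exists (N + N')%nat, (fun i => if Nat.ltb i N then c i else c' (i - N)%nat),
    (fun i => if Nat.ltb i N then A i else A' (i - N)%nat).
  split; [|split].
  - intros i Hi. destruct (Nat.ltb_spec i N).
    + destruct (H1 i) as (? & ? & Hh); auto. split; auto. split; auto. intros y Hy; apply Hh in Hy; tauto.
    + destruct (H1' (i - N)%nat) as (? & ? & Hh); [lia|]. split; auto. split; auto. intros y Hy; apply Hh in Hy; tauto.
  - intros i j x Hi Hj Hij. destruct (Nat.ltb_spec i N), (Nat.ltb_spec j N); intros Hx Hy.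
    + eapply H2; eauto.
    + apply (Hd x). apply (proj1 (proj2 (proj2 (H1 i H)) x Hx)). apply (proj1 (proj2 (proj2 (H1' (j-N)%nat ltac:(lia))) x Hy)).
    + apply (Hd x). apply (proj1 (proj2 (proj2 (H1 j H0)) x Hy)). apply (proj1 (proj2 (proj2 (H1' (i-N)%nat ltac:(lia))) x Hx)).
    + eapply (H2' (i - N)%nat (j - N)%nat); eauto; lia.
  - rewrite sumN_app, H3, H3'. f_equal.
    + apply sumN_ext; intros i Hi. destruct (Nat.ltb_spec i N); [reflexivity|lia].
    + apply sumN_ext; intros i Hi. destruct (Nat.ltb_spec (N + i) N); [lia|].
      replace (N + i - N)%nat with i by lia. reflexivity.
Qed.

Lemma simple_on_sum mu f M (Es : nat -> R -> Prop) (s : nat -> R) :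
  (forall j, (j < M)%nat -> simple_on mu (Es j) f (s j)) ->
  (forall i j x, (i < M)%nat -> (j < M)%nat -> i <> j -> Es i x -> Es j x -> False) ->
  simple_on mu (fun x => exists j, (j < M)%nat /\ Es j x) f (sumN M s).
Proof.
  induction M; intros Hs Hd.
  - rewrite sumN_0. apply simple_on_zero.
  - rewrite sumN_S. apply simple_on_mono with (E := fun x => (exists j, (j < M)%nat /\ Es j x) \/ Es M x) (f := f); [| |apply simple_on_concat].
    + intros x [[j [Hj Hx]]|Hx] _; [exists j; split; auto; lia| exists M; split; auto].
    + intros; lra.
    + intros x [j [Hj Hx]] Hy. eapply (Hd j M); eauto. lia.
    + apply IHM. intros; apply Hs; lia. intros i j x Hi Hj Hij Hx Hy; apply (Hd i j x); auto; lia.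
    + apply Hs; lia.
Qed.

Lemma simple_on_nonneg mu E f s : borel_measure mu -> simple_on mu E f s -> 0 <= s.
Proof.
  intros [Hpos _] (N & c & A & H1 & H2 & H3). subst s. apply sumN_nonneg.
  intros i Hi. destruct (H1 i Hi) as (? & ? & _). apply Rmult_le_pos; auto.
Qed.

Lemma amgm r k c : 0 <= r -> 0 < c -> 2 * r ^ S k <= c * r ^ k + r ^ S (S k) / c.
Proof.
  intros Hr Hc. simpl. assert (0 <= r ^ k) by (apply pow_le; auto).
  assert (c * r ^ k + r * (r * r ^ k) / c - 2 * (r * r ^ k) = r ^ k * (c - r) * (c - r) / c) by (field; lra).
  assert (0 <= r ^ k * (c - r) * (c - r) / c).
  { apply Rmult_le_pos; [|left; apply Rinv_0_lt_compat; auto].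
    rewrite Rmult_assoc. apply Rmult_le_pos; auto. pose proof (Rle_0_sqr (c - r)) as Hs; unfold Rsqr in Hs; exact Hs. }
  lra.
Qed.

Lemma stieltjes_ineq z : stieltjes_moment_seq z -> forall k c, 0 < c ->
  2 * z (S k) <= c * z k + z (S (S k)) / c.
Proof.
  intros (nu & Hm & Hsupp & Hint) k c Hc.
  destruct (Hint (S k)) as [_ Hl].
  assert (z (S k) <= (c * z k + z (S (S k)) / c) / 2); [|lra].
  apply Hl. intros s (N & cc & A & H1 & H2 & H3).
  set (r := fun i => rt (S k) (cc i)).
  assert (Hr : forall i, (i < N)%nat -> r i ^ S k = cc i /\ forall x, A i x -> 0 <= x /\ r i <= x).
  { intros i Hi. destruct (H1 i Hi) as (Hc0 & _ & HA). split.
    - apply rt_pow; auto; lia.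
    - intros x Hx. destruct (HA x Hx) as [Hx0 Hcx]. split; auto.
      apply (pow_le_inv (S k)); auto; [lia|apply rt_nonneg|]. unfold r; rewrite rt_pow; auto; lia. }
  assert (Hk : sumN N (fun i => r i ^ k * nu (A i)) <= z k).
  { destruct (Hint k) as [Hub _]. apply Hub. exists N, (fun i => r i ^ k), A. split; [|split; auto].
    intros i Hi. destruct (H1 i Hi) as (_ & Hb & _). split; [apply pow_le, rt_nonneg|split; auto].
    intros x Hx. destruct (Hr i Hi) as [_ Hrx]. destruct (Hrx x Hx). split; auto. apply pow_incr; split; auto. apply rt_nonneg. }
  assert (Hk2 : sumN N (fun i => r i ^ S (S k) * nu (A i)) <= z (S (S k))).
  { destruct (Hint (S (S k))) as [Hub _]. apply Hub. exists N, (fun i => r i ^ S (S k)), A. split; [|split; auto].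
    intros i Hi. destruct (H1 i Hi) as (_ & Hb & _). split; [apply pow_le, rt_nonneg|split; auto].
    intros x Hx. destruct (Hr i Hi) as [_ Hrx]. destruct (Hrx x Hx). split; auto. apply pow_incr; split; auto. apply rt_nonneg. }
  rewrite H3.
  apply Rle_trans with (sumN N (fun i => (c * (r i ^ k * nu (A i)) + / c * (r i ^ S (S k) * nu (A i))) / 2)).
  - apply sumN_le. intros i Hi. destruct (Hr i Hi) as [Hri _]. rewrite <- Hri.
    destruct Hm as [Hpos _]. destruct (H1 i Hi) as (_ & Hb & _). pose proof (Hpos _ Hb).
    pose proof (amgm (r i) k c (rt_nonneg _ _) Hc).
    assert (2 * r i ^ S k * nu (A i) <= (c * r i ^ k + r i ^ S (S k) / c) * nu (A i)) by (apply Rmult_le_compat_r; auto).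
    unfold Rdiv in *. nra.
  - replace (sumN N (fun i => (c * (r i ^ k * nu (A i)) + / c * (r i ^ S (S k) * nu (A i))) / 2))
      with (/2 * (c * sumN N (fun i => r i ^ k * nu (A i)) + / c * sumN N (fun i => r i ^ S (S k) * nu (A i)))).
    + assert (0 < / c) by (apply Rinv_0_lt_compat; auto). unfold Rdiv. nra.
    + rewrite <- !sumN_scal, <- sumN_plus, <- sumN_scal. apply sumN_ext; intros; field.
      all: lra.
Qed.

Definition dirac (a : R) (A : R -> Prop) : R := if excluded_middle_informative (A a) then 1 else 0.

Lemma sum_indic (f : nat -> R) k0 :
  (forall k, f k = if Nat.eqb k k0 then 1 else 0) ->
  forall n, (k0 <= n)%nat -> sum_f_R0 f n = 1.
Proof.
  intros Hf. assert (forall n, sum_f_R0 f n = if Nat.ltb n k0 then 0 else 1).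
  { induction n; simpl.
    - rewrite Hf. destruct k0; simpl; reflexivity.
    - rewrite IHn, Hf. destruct (Nat.ltb_spec n k0), (Nat.ltb_spec (S n) k0), (Nat.eqb_spec (S n) k0); try lia; lra. }
  intros n Hn. rewrite H. destruct (Nat.ltb_spec n k0); [lia|reflexivity].
Qed.

Lemma dirac_measure a : borel_measure (dirac a).
Proof.
  split; [|split].
  - intros A _. unfold dirac. destruct excluded_middle_informative; lra.
  - unfold dirac. destruct excluded_middle_informative; [contradiction|reflexivity].
  - intros A _ Hd. destruct (classic (exists k, A k a)) as [[k0 Hk0]|Hn].
    + assert (E : dirac a (fun x => exists k, A k x) = 1).
      { unfold dirac. destruct excluded_middle_informative as [_|Hn]; [reflexivity|exfalso; eauto]. }
      rewrite E. intros e He. exists k0. intros n Hn. rewrite (sum_indic _ k0); auto.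
      * unfold Rdist. rewrite Rminus_diag, Rabs_R0; lra.
      * intros k. unfold dirac. destruct excluded_middle_informative, (Nat.eqb_spec k k0); subst; auto; try contradiction.
        exfalso; eapply Hd; eauto.
    + assert (E : dirac a (fun x => exists k, A k x) = 0).
      { unfold dirac. destruct excluded_middle_informative as [H|_]; [exfalso; auto|reflexivity]. }
      rewrite E. intros e He. exists 0%nat. intros n _.
      assert (sum_f_R0 (fun k => dirac a (A k)) n = 0).
      { induction n; simpl; [|rewrite IHn]; unfold dirac; destruct excluded_middle_informative; try (exfalso; apply Hn; eauto; fail); try lra. }
      rewrite H. unfold Rdist. rewrite Rminus_diag, Rabs_R0; lra.
Qed.

Lemma dirac_in a A : A a -> dirac a A = 1.
Proof. intros H; unfold dirac; destruct excluded_middle_informative; tauto. Qed.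
Lemma dirac_out a A : ~ A a -> dirac a A = 0.
Proof. intros H; unfold dirac; destruct excluded_middle_informative; tauto. Qed.

Lemma dirac_sum a N (c : nat -> R) (A : nat -> R -> Prop) :
  (forall i j, (i < N)%nat -> (j < N)%nat -> i <> j -> A i a -> A j a -> False) ->
  (sumN N (fun i => c i * dirac a (A i)) = 0 /\ forall i, (i < N)%nat -> ~ A i a) \/
  (exists i0, (i0 < N)%nat /\ A i0 a /\ sumN N (fun i => c i * dirac a (A i)) = c i0).
Proof.
  induction N; intros Hd.
  - left; split; [reflexivity|intros; lia].
  - rewrite sumN_S. destruct IHN as [[H0 Hn]|[i0 (Hi0 & HA & Hs)]].
    + intros i j Hi Hj; apply Hd; lia.
    + destruct (classic (A N a)) as [HN|HN]; [rewrite (dirac_in _ _ HN)|rewrite (dirac_out _ _ HN)].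
      * right. exists N. split; [lia|split; auto]. rewrite H0; lra.
      * left. split; [rewrite H0; lra|]. intros i Hi. destruct (Nat.eq_dec i N); subst; auto. apply Hn; lia.
    + right. exists i0. split; [lia|split; auto]. destruct (classic (A N a)) as [HN|HN]; [rewrite (dirac_in _ _ HN)|rewrite (dirac_out _ _ HN)].
      * exfalso; apply (Hd i0 N); auto; lia.
      * rewrite Hs; lra.
Qed.

Lemma dirac_stieltjes a : 0 <= a -> stieltjes_moment_seq (fun m => a ^ m).
Proof.
  intros Ha. exists (dirac a). split; [apply dirac_measure|split].
  - unfold supported_nonneg, dirac. destruct excluded_middle_informative; [lra|reflexivity].
  - intros m. split.
    + intros s (N & c & A & H1 & H2 & H3). subst s.
      change (sumN N (fun i => c i * dirac a (A i)) <= a ^ m).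
      destruct (dirac_sum a N c A) as [[H0 _]|[i0 (Hi0 & HA & Hs)]].
      * intros; eapply H2; eauto.
      * rewrite H0. apply pow_le; auto.
      * rewrite Hs. apply (H1 i0 Hi0); auto.
    + intros b Hb. apply Hb. exists 1%nat, (fun _ => a ^ m), (fun _ x => x = a). split; [|split].
      * intros i Hi. split; [apply pow_le; auto|split; [apply borel_single|]]. intros x ->. split; auto; lra.
      * intros; lia.
      * unfold sumN, dirac; simpl. destruct excluded_middle_informative; [lra|contradiction].
Qed.

Lemma step_ineq (n : nat -> nat) x k :
  (n k <= n (S k))%nat -> (n (S k) <= n (S (S k)))%nat -> 0 < x ->
  stieltjes_moment_seq (fun k => x ^ n k) ->
  x ^ (n (S k) - n k) <= x ^ (n (S (S k)) - n (S k)).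
Proof.
  intros H1 H2 Hx Hs. pose proof (stieltjes_ineq _ Hs k (x ^ (n (S k) - n k)) (pow_lt _ _ Hx)) as H.
  cbv beta in H.
  set (a := (n (S k) - n k)%nat) in *. set (b := (n (S (S k)) - n (S k))%nat) in *.
  replace (n (S k)) with (n k + a)%nat in H by (unfold a; lia).
  replace (n (S (S k))) with (n k + a + b)%nat in H by (unfold a, b; lia).
  rewrite !pow_add in H.
  assert (HP : 0 < x ^ n k) by (apply pow_lt; auto).
  assert (HA : 0 < x ^ a) by (apply pow_lt; auto).
  replace (x ^ n k * x ^ a * x ^ b / x ^ a) with (x ^ n k * x ^ b) in H by (field; lra).
  assert (x ^ n k * x ^ a <= x ^ n k * x ^ b) by lra.
  apply Rmult_le_reg_l with (x ^ n k); auto.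
Qed.

Lemma forward (n : nat -> nat) (Hinc : forall i j : nat, (i < j)%nat -> (n i < n j)%nat) :
  (forall y : nat -> R, stieltjes_moment_seq y -> stieltjes_moment_seq (fun k => y (n k))) ->
  exists d l : nat, forall k : nat, n k = (d * k + l)%nat.
Proof.
  intros H.
  assert (Hstep : forall k, (n (S k) - n k = n (S (S k)) - n (S k))%nat).
  { intros k.
    assert (H1 : (n k <= n (S k))%nat) by (apply Nat.lt_le_incl, Hinc; lia).
    assert (H2 : (n (S k) <= n (S (S k)))%nat) by (apply Nat.lt_le_incl, Hinc; lia).
    pose proof (step_ineq n 2 k H1 H2 ltac:(lra) (H _ (dirac_stieltjes 2 ltac:(lra)))) as E2.
    pose proof (step_ineq n (/2) k H1 H2 ltac:(lra) (H _ (dirac_stieltjes (/2) ltac:(lra)))) as E3.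
    set (a := (n (S k) - n k)%nat) in *. set (b := (n (S (S k)) - n (S k))%nat) in *.
    destruct (Nat.lt_trichotomy a b) as [Hab|[Hab|Hab]]; auto; exfalso.
    - pose proof (pow_lt_1_compat (/2) (b - a) ltac:(lra) ltac:(lia)) as [_ Hl].
      replace b with (a + (b - a))%nat in E3 by lia. rewrite pow_add in E3.
      assert (0 < (/2) ^ a) by (apply pow_lt; lra). nra.
    - pose proof (Rlt_pow 2 b a ltac:(lra) Hab). lra. }
  exists (n 1%nat - n 0%nat)%nat, (n 0%nat).
  assert (Hinc1 : forall k, (n k < n (S k))%nat) by (intros; apply Hinc; lia).
  assert (forall k, (n k = (n 1 - n 0) * k + n 0 /\ n (S k) = (n 1 - n 0) * S k + n 0)%nat).
  { induction k.
    - pose proof (Hinc1 0%nat). split; lia.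
    - destruct IHk as [IH1 IH2]. split; auto. pose proof (Hstep k). pose proof (Hinc1 k). pose proof (Hinc1 (S k)). nia. }
  intros k; apply H0.
Qed.

Definition nu (mu : (R -> Prop) -> R) (d l : nat) (A : R -> Prop) : R :=
  lubR (simple_on mu (fun x => A (x ^ d)) (fun x => x ^ l)).

Lemma nu_spec mu y d l A :
  (forall n, integral_nonneg_eq mu (fun x => x ^ n) (y n)) ->
  is_lub (simple_on mu (fun x => A (x ^ d)) (fun x => x ^ l)) (nu mu d l A).
Proof.
  intros Hint. apply lubR_spec.
  - exists (y l). intros s Hs. apply (proj1 (Hint l)). eapply simple_on_below; eauto.
  - exists 0; apply simple_on_zero.
Qed.

Lemma nu_nonneg mu y d l A :
  (forall n, integral_nonneg_eq mu (fun x => x ^ n) (y n)) -> 0 <= nu mu d l A.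
Proof. intros Hint. apply (proj1 (nu_spec mu y d l A Hint)). apply simple_on_zero. Qed.

Lemma nu_zero mu y d l A : borel_measure mu ->
  (forall n, integral_nonneg_eq mu (fun x => x ^ n) (y n)) ->
  (forall x, 0 <= x -> ~ A (x ^ d)) -> nu mu d l A = 0.
Proof.
  intros Hm Hint HA. pose proof (nu_spec mu y d l A Hint) as [Hub Hl].
  apply Rle_antisym; [|apply Hub, simple_on_zero].
  apply Hl. intros s (N & c & B & H1 & H2 & H3). subst s.
  rewrite <- (sumN_zero N). apply Req_le. apply sumN_ext. intros i Hi.
  destruct (H1 i Hi) as (_ & _ & HB).
  replace (B i) with (fun _ : R => False).
  - destruct Hm as (_ & H0 & _). rewrite H0; lra.
  - apply set_ext. intros x; split; [tauto|]. intros Hx. destruct (HB x Hx) as (? & ? & _). apply (HA x); auto.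
Qed.

Lemma borel_pow_pre d : (1 <= d)%nat -> forall a, borel (fun x => 0 <= x /\ x ^ d < a).
Proof.
  intros Hd a. destruct (Rle_dec a 0).
  - apply borel_ext with (fun _ => False). apply borel_False.
    intros x; split; [tauto|]. intros [Hx Hlt]. pose proof (pow_le x d Hx). lra.
  - apply borel_ext with (fun x => 0 <= x /\ x < rt d a).
    + apply borel_inter; [apply borel_ge|apply borel_lt].
    + intros x; split; intros [Hx H]; split; auto.
      * rewrite <- (rt_pow d a) by (auto; lra). apply pow_lt_mono; auto.
      * apply Rnot_le_lt. intros Hle. assert (rt d a ^ d <= x ^ d) by (apply pow_incr; split; auto; apply rt_nonneg).
        rewrite rt_pow in H0 by (auto; lra). lra.
Qed.

Lemma borel_rt_pre d : (1 <= d)%nat -> forall a, borel (fun t => 0 <= t /\ rt d t < a).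
Proof.
  intros Hd a. destruct (Rle_dec a 0).
  - apply borel_ext with (fun _ => False). apply borel_False.
    intros x; split; [tauto|]. intros [Hx Hlt]. pose proof (rt_nonneg d x). lra.
  - apply borel_ext with (fun t => 0 <= t /\ t < a ^ d).
    + apply borel_inter; [apply borel_ge|apply borel_lt].
    + intros t; split; intros [Ht H]; split; auto.
      * apply Rnot_le_lt. intros Hle. assert (a ^ d <= rt d t ^ d) by (apply pow_incr; split; lra).
        rewrite rt_pow in H0 by auto. lra.
      * rewrite <- (rt_pow d t) by auto. apply pow_lt_mono; auto. apply rt_nonneg.
Qed.

Lemma nu_partial mu y d l (A : nat -> R -> Prop) :
  (forall n, integral_nonneg_eq mu (fun x => x ^ n) (y n)) ->
  (forall i j x, i <> j -> A i x -> A j x -> False) ->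
  forall M, sumN M (fun k => nu mu d l (A k)) <= nu mu d l (fun x => exists k, A k x).
Proof.
  intros Hint Hd M.
  rewrite (sumN_ext M _ (fun k => 1 * nu mu d l (A k))) by (intros; lra).
  apply sup_sum with (T := fun k => simple_on mu (fun x => A k (x ^ d)) (fun x => x ^ l)).
  - intros j _. split; [apply (nu_spec mu y)|exists 0; apply simple_on_zero]; auto.
  - intros; lra.
  - intros s Hs. apply (proj1 (nu_spec mu y d l _ Hint)).
    rewrite (sumN_ext M _ s) by (intros; lra).
    apply simple_on_mono with (E := fun x => exists j, (j < M)%nat /\ A j (x ^ d)) (f := fun x => x ^ l); [| |apply simple_on_sum; auto].
    + intros x [j [_ Hj]] _. exists j; auto.
    + intros; lra.
    + intros i j x _ _ Hij. apply Hd; auto.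
Qed.

Lemma nu_additive mu y d l (A : nat -> R -> Prop) :
  borel_measure mu -> (1 <= d)%nat ->
  (forall n, integral_nonneg_eq mu (fun x => x ^ n) (y n)) ->
  (forall k, borel (A k)) ->
  (forall i j x, i <> j -> A i x -> A j x -> False) ->
  infinite_sum (fun k => nu mu d l (A k)) (nu mu d l (fun x => exists k, A k x)).
Proof.
  intros Hm Hd1 Hint HA Hd e He.
  pose proof (nu_spec mu y d l (fun x => exists k, A k x) Hint) as HU.
  destruct (lub_approx _ _ (e/2) HU) as [s [Hs Hse]]; [lra|].
  destruct Hs as (N & c & B & H1 & H2 & H3).
  set (B' := fun i k x => B i x /\ (0 <= x /\ A k (x ^ d))).
  assert (HB'b : forall i k, (i < N)%nat -> borel (B' i k)).
  { intros i k Hi. apply borel_inter. apply (H1 i Hi). apply borel_preimage; auto. apply borel_pow_pre; auto. }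
  assert (Hcv : forall i, (i < N)%nat -> Un_cv (fun K => sum_f_R0 (fun k => mu (B' i k)) K) (mu (B i))).
  { intros i Hi. destruct Hm as (_ & _ & Hadd).
    assert (Heq : (fun x => exists k, B' i k x) = B i).
    { apply set_ext. intros x; split.
      + intros [k [Hx _]]; auto.
      + intros Hx. destruct (proj2 (proj2 (H1 i Hi)) x Hx) as ([k Hk] & Hx0 & _).
        exists k. split; auto. }
    pose proof (Hadd (B' i)) as Hs. rewrite Heq in Hs. apply Hs.
    - intros k; apply HB'b; auto.
    - intros k k' x Hkk' [_ [_ H]] [_ [_ H']]. apply (Hd k k' (x ^ d)); auto. }
  pose proof (cv_sumN N c (fun i k => mu (B' i k)) (fun i => mu (B i)) Hcv) as Hcv2.
  destruct (Hcv2 (e/2)) as [K0 HK0]; [lra|].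
  exists K0. intros n Hn. specialize (HK0 n Hn).
  set (h := fun k => sumN N (fun i => c i * mu (B' i k))).
  assert (Hh : forall k, h k <= nu mu d l (A k)).
  { intros k. apply (proj1 (nu_spec mu y d l (A k) Hint)). exists N, c, (fun i => B' i k). split; [|split; auto].
    - intros i Hi. destruct (H1 i Hi) as (Hc & _ & HBi). split; auto. split; [apply HB'b; auto|].
      intros x [Hx [Hx0 HAk]]. destruct (HBi x Hx) as (_ & _ & Hcx). auto.
    - intros i j x Hi Hj Hij [Hx _] [Hy _]. eapply H2; eauto. }
  assert (Hswap : sumN N (fun i => c i * sum_f_R0 (fun k => mu (B' i k)) n) = sum_f_R0 h n).
  { unfold h. rewrite sum_f_swap. apply sumN_ext. intros i _. clear. induction n; simpl; [|rewrite <- IHn]; ring. }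
  rewrite Hswap in HK0. rewrite <- H3 in HK0.
  assert (sum_f_R0 h n <= sum_f_R0 (fun k => nu mu d l (A k)) n) by (apply sum_Rle; intros; apply Hh).
  pose proof (nu_partial mu y d l A Hint Hd (S n)). rewrite sumN_sum_f in H0.
  unfold Rdist in *. apply Rabs_def2 in HK0. apply Rabs_def1; lra.
Qed.

Lemma nu_upper mu y d l k :
  (forall n, integral_nonneg_eq mu (fun x => x ^ n) (y n)) ->
  is_upper_bound (simple_below (nu mu d l) (fun t => t ^ k)) (y (d * k + l)%nat).
Proof.
  intros Hint s (N & a & A & H1 & H2 & H3). subst s.
  change (sumN N (fun j => a j * nu mu d l (A j)) <= y (d * k + l)%nat).
  apply sup_sum with (T := fun j => simple_on mu (fun x => A j (x ^ d)) (fun x => x ^ l)).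
  - intros j _. split. apply (nu_spec mu y). exact Hint. exists 0; apply simple_on_zero.
  - intros j Hj; apply (proj1 (H1 j Hj)).
  - intros s Hs. apply (proj1 (Hint (d * k + l)%nat)).
    apply simple_on_below with (E := fun x => exists j, (j < N)%nat /\ A j (x ^ d)).
    apply simple_on_sum.
    + intros j Hj. apply simple_on_mono with (E := fun x => A j (x ^ d)) (f := fun x => a j * x ^ l).
      * auto.
      * intros x HA Hx. destruct (H1 j Hj) as (_ & _ & HAj). destruct (HAj _ HA) as [_ Hak].
        rewrite pow_add, pow_mult. apply Rmult_le_compat_r; auto. apply pow_le; auto.
      * apply simple_on_scal; [apply (proj1 (H1 j Hj))|apply Hs; auto].
    + intros i j x Hi Hj Hij. apply H2; auto.
Qed.

Lemma nu_lower_aux mu y d l k b N c (B : nat -> R -> Prop) (a bb : nat -> R) :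
  (1 <= d)%nat ->
  (forall n, integral_nonneg_eq mu (fun x => x ^ n) (y n)) ->
  borel_measure mu ->
  is_upper_bound (simple_below (nu mu d l) (fun t => t ^ k)) b ->
  (forall i, (i < N)%nat -> 0 <= c i /\ borel (B i) /\ (forall x, B i x -> 0 <= x /\ c i <= x ^ (d * k + l))) ->
  (forall i j x, (i < N)%nat -> (j < N)%nat -> i <> j -> B i x -> B j x -> False) ->
  (forall i, (i < N)%nat -> 0 <= a i /\ 0 <= bb i /\ c i <= a i * bb i /\
      forall x, B i x -> a i <= (x ^ d) ^ k /\ bb i <= x ^ l) ->
  sumN N (fun i => c i * mu (B i)) <= b.
Proof.
  intros Hd1 Hint Hm Hb H1 H2 Hab.
  set (A := fun i t => 0 <= t /\ B i (rt d t)).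
  apply Rle_trans with (sumN N (fun i => a i * nu mu d l (A i))).
  - apply sumN_le. intros i Hi. destruct (Hab i Hi) as (Ha & Hbb & Hc & Hx).
    destruct (H1 i Hi) as (Hc0 & HBb & HBi).
    assert (Hmu : 0 <= mu (B i)) by (apply (proj1 Hm); auto).
    assert (bb i * mu (B i) <= nu mu d l (A i)).
    { apply (proj1 (nu_spec mu y d l (A i) Hint)).
      exists 1%nat, (fun _ => bb i), (fun _ => B i). split; [|split].
      - intros j _. split; auto. split; auto. intros x HxB. destruct (HBi x HxB) as [Hx0 _].
        split; [|split; auto; apply (Hx x HxB)].
        unfold A. split; [apply pow_le; auto|]. rewrite rt_of_pow; auto.
      - intros; lia.
      - unfold sumN; simpl; ring. }
    apply Rle_trans with (a i * (bb i * mu (B i))).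
    + rewrite <- Rmult_assoc. apply Rmult_le_compat_r; auto.
    + apply Rmult_le_compat_l; auto.
  - apply Hb. exists N, a, A. split; [|split; auto].
    + intros i Hi. destruct (Hab i Hi) as (Ha & _ & _ & Hx). destruct (H1 i Hi) as (_ & HBb & _).
      split; auto. split.
      * apply borel_preimage; auto. apply borel_rt_pre; auto.
      * intros t [Ht HBt]. split; auto. destruct (Hx _ HBt) as [Hak _]. rewrite rt_pow in Hak; auto.
    + intros i j t Hi Hj Hij [_ Hti] [_ Htj]. eapply H2; eauto.
Qed.

Lemma nu_integral mu y d l k :
  (1 <= d)%nat -> borel_measure mu ->
  (forall n, integral_nonneg_eq mu (fun x => x ^ n) (y n)) ->
  integral_nonneg_eq (nu mu d l) (fun t => t ^ k) (y (d * k + l)%nat).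
Proof.
  intros Hd1 Hm Hint. split; [apply nu_upper; auto|].
  intros b Hb. apply (proj2 (Hint (d * k + l)%nat)).
  intros s (N & c & B & H1 & H2 & H3). subst s.
  change (sumN N (fun i => c i * mu (B i)) <= b).
  destruct (Nat.eq_dec (d * k + l) 0) as [Hz|Hnz].
  - assert (k = 0%nat /\ l = 0%nat) as [-> ->] by nia.
    apply (nu_lower_aux mu y d 0 0 b N c B c (fun _ => 1)); auto.
    + intros i Hi. destruct (H1 i Hi) as (? & ? & HB). split; auto. split; [lra|split; [lra|]].
      intros x Hx. destruct (HB x Hx) as [_ Hc]. rewrite Hz in Hc. simpl in *. lra.
  - set (m := (d * k + l)%nat).
    set (r := fun i => rt m (c i)).
    apply (nu_lower_aux mu y d l k b N c B (fun i => r i ^ (d * k)) (fun i => r i ^ l)); auto.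
    + intros i Hi. destruct (H1 i Hi) as (Hc0 & _ & HB).
      assert (Hr0 : 0 <= r i) by apply rt_nonneg.
      split; [apply pow_le; auto|split; [apply pow_le; auto|split]].
      * rewrite <- pow_add. fold m. unfold r. rewrite rt_pow; auto; [lra|unfold m; lia].
      * intros x Hx. destruct (HB x Hx) as [Hx0 Hcx].
        assert (Hrx : r i <= x).
        { apply (pow_le_inv m); auto; [unfold m; lia|]. unfold r; rewrite rt_pow; auto; unfold m in *; lia. }
        rewrite <- pow_mult. split; apply pow_incr; auto.
Qed.

Lemma backward mu y d l : (1 <= d)%nat ->
  borel_measure mu -> supported_nonneg mu ->
  (forall n, integral_nonneg_eq mu (fun x => x ^ n) (y n)) ->
  stieltjes_moment_seq (fun k => y (d * k + l)%nat).
Proof.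
  intros Hd1 Hm Hs Hint. exists (nu mu d l). split; [|split].
  - split; [|split].
    + intros A _. apply (nu_nonneg mu y); auto.
    + apply (nu_zero mu y); auto.
    + intros A HA Hdis. apply (nu_additive mu y); auto.
  - unfold supported_nonneg. apply (nu_zero mu y); auto.
    intros x Hx H. pose proof (pow_le x d Hx). lra.
  - intros k. apply nu_integral; auto.
Qed.
Theorem theorem4p3 (n : nat -> nat)
  (Hinc : forall i j : nat, (i < j)%nat -> (n i < n j)%nat) :
  (forall y : nat -> R, stieltjes_moment_seq y ->
     stieltjes_moment_seq (fun k => y (n k)))
  <-> exists d l : nat, forall k : nat, n k = (d * k + l)%nat.
Proof.
  split.
  - apply forward; auto.
  - intros [d [l Hn]] y (mu & Hm & Hs & Hint).
    assert (Hd1 : (1 <= d)%nat).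
    { pose proof (Hinc 0%nat 1%nat ltac:(lia)) as H. rewrite !Hn in H. nia. }
    replace (fun k => y (n k)) with (fun k => y (d * k + l)%nat).
    + apply (backward mu y d l); auto.
    + apply functional_extensionality; intros k; rewrite Hn; reflexivity.
Qed.
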